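(* Let $\mathcal{C}$ be a simplicial complex on $[n]$. Then $\mathcal{C}$ is unimodular if and only if its Lawrence lifting $\Lambda(\mathcal{C})$ is unimodular.
   Context: A simplicial complex on $[n]$ is a family of subsets of $[n]$ closed under subsets; facets are inclusion-maximal faces. $\Lambda(\mathcal{C})$ is the simplicial complex on $[n+1]$ with facets $[n]$ and $F\cup\{n+1\}$ for each facet $F$ of $\mathcal{C}$. $\mathcal{A}_{\mathcal{C}}$ is the $0/1$ matrix with columns indexed by $\mathbf{i}\in\{1,2\}^n$ and rows indexed by pairs $(F,\mathbf{e})$, $F$ a facet, $\mathbf{e}\in\{1,2\}^F$; entry $1$ iff $\mathbf{e}=\mathbf{i}|_F$. An integer matrix is unimodular if every circuit (nonzero integer kernel vector with coprime entries and inclusion-minimal support) has entries in $\{0,\pm1\}$; a complex is unimodular if its matrix $\mathcal{A}$ is. *)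

(* Defs.v *)
From mathcomp Require Import all_boot all_order all_algebra.
Set Implicit Arguments. Unset Strict Implicit. Unset Printing Implicit Defensive.
Import GRing.Theory Num.Theory.
Local Open Scope ring_scope.

(* A simplicial complex on [n] (vertices 'I_n, vertex k+1 of the paper is k):
   a family of subsets closed under taking subsets. *)
Definition is_simplicial_complex (n : nat) (C : {set {set 'I_n}}) : Prop :=
  forall F G : {set 'I_n}, F \in C -> G \subset F -> G \in C.

Definition facets (n : nat) (C : {set {set 'I_n}}) : {set {set 'I_n}} :=
  [set F in C | [forall G in C, (F \subset G) ==> (G == F)]].

(* Lawrence lifting: the simplicial complex on [n+1] generated by the facets
   [n] and F u {n+1} (F a facet of C); the new vertex n+1 is ord_max. *)
Definition lawrence (n : nat) (C : {set {set 'I_n}}) : {set {set 'I_n.+1}} :=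
  [set G : {set 'I_n.+1} |
     (G \subset [set i : 'I_n.+1 | i != ord_max])
     || [exists F in facets C,
           G \subset ord_max |: [set widen_ord (leqnSn n) x | x in F]]].

(* Rows of A_C: pairs (F, e) with F a facet and e in {1,2}^F; the label e is
   represented by a function 'I_n -> bool (false = 1, true = 2) that is
   normalised to false outside F.  Columns: i in {1,2}^n as {ffun 'I_n -> bool}. *)
Definition row_index (n : nat) (C : {set {set 'I_n}}) :=
  {p : {set 'I_n} * {ffun 'I_n -> bool} |
     (p.1 \in facets C) && [forall v in ~: p.1, p.2 v == false]}.

Definition col_index (n : nat) := {ffun 'I_n -> bool}.

Definition cmatrix (n : nat) (C : {set {set 'I_n}})
    (r : row_index C) (c : col_index n) : int :=
  if [forall v in (sval r).1, c v == (sval r).2 v] then 1 else 0.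

Section Unimod.
Variables (R Col : finType) (A : R -> Col -> int).

Definition in_kernel (x : Col -> int) : Prop :=
  forall r : R, \sum_(c : Col) A r c * x c = 0.

Definition supp (x : Col -> int) : {set Col} := [set c | x c != 0].

Definition circuit (x : Col -> int) : Prop :=
  [/\ in_kernel x, supp x != set0,
      (\big[gcdn/0%N]_(c : Col) `|x c|%N)%N = 1%N &
      forall y : Col -> int, in_kernel y -> supp y != set0 ->
        ~ (supp y \proper supp x)].

Definition unimodular : Prop :=
  forall x : Col -> int, circuit x -> forall c : Col, x c \in [:: 0; 1; -1].
End Unimod.

Definition unimodular_complex (n : nat) (C : {set {set 'I_n}}) : Prop :=
  unimodular (@cmatrix n C).

(* Main.v *)
Require Import Defs.
From mathcomp Require Import all_boot all_order all_algebra.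
From Stdlib Require Import FunctionalExtensionality.
Set Implicit Arguments. Unset Strict Implicit. Unset Printing Implicit Defensive.
Import GRing.Theory Num.Theory.
Local Open Scope ring_scope.

Section Lift.
Variable n : nat.
Local Notation wd := (widen_ord (leqnSn n)).

Definition pic (c : col_index n.+1) : col_index n := [ffun i => c (wd i)].
Definition ext (d : col_index n) (b : bool) : col_index n.+1 :=
  [ffun j => if unlift ord_max j is Some i then d i else b].

Lemma lift_wd (i : 'I_n) : lift ord_max i = wd i.
Proof. by apply: val_inj; rewrite /= /bump leqNgt ltn_ord. Qed.

Lemma ext_wd d b i : ext d b (wd i) = d i.
Proof. by rewrite ffunE -lift_wd liftK. Qed.

Lemma ext_max d b : ext d b ord_max = b.
Proof. by rewrite ffunE unlift_none. Qed.

Lemma pic_ext d b : pic (ext d b) = d.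
Proof. by apply/ffunP=> i; rewrite ffunE ext_wd. Qed.

Lemma ext_pic c : ext (pic c) (c ord_max) = c.
Proof.
apply/ffunP=> j; rewrite ffunE; case: unliftP => [i ->|->] //.
by rewrite ffunE lift_wd.
Qed.

Lemma big_ext (R : Type) (idx : R) (op : Monoid.com_law idx) (f : col_index n.+1 -> R) :
  \big[op/idx]_c f c = \big[op/idx]_d \big[op/idx]_(b : bool) f (ext d b).
Proof.
rewrite pair_big (reindex (fun p : col_index n * bool => ext p.1 p.2)) /=.
  by apply: eq_bigr => -[d b].
exists (fun c => (pic c, c ord_max)) => [[d b] _|c _] /=.
  by rewrite pic_ext ext_max.
by rewrite ext_pic.
Qed.

Lemma forall_n (P : pred 'I_n.+1) :
  [forall v in [set i : 'I_n.+1 | i != ord_max], P v] = [forall u, P (wd u)].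
Proof.
apply/forallP/forallP => H u.
  by have := H (wd u); rewrite inE neq_ltn /= ltn_ord.
apply/implyP; rewrite inE; case: (unliftP ord_max u) => [i ->|->]; last by rewrite eqxx.
by rewrite lift_wd => _; apply: H.
Qed.

Lemma forall_F (F : {set 'I_n}) (P : pred 'I_n.+1) :
  [forall v in ord_max |: [set wd x | x in F], P v] =
  P ord_max && [forall u in F, P (wd u)].
Proof.
apply/forallP/andP => [H|[H1 /forallP H2] v].
  split; first by have := H ord_max; rewrite setU11.
  apply/forallP => u; apply/implyP => uF.
  have := H (wd u); rewrite inE mem_imset ?uF ?orbT //.
  by move=> a b Hab; apply: val_inj; exact: (congr1 val Hab).
apply/implyP; rewrite !inE => /orP[/eqP->//|/imsetP[u uF ->]].
by have := H2 u; rewrite uF.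
Qed.
End Lift.

Definition marg m (x : col_index m -> int) (G : {set 'I_m}) : Prop :=
  forall e : col_index m, \sum_(c : col_index m | [forall v in G, c v == e v]) x c = 0.

Lemma rowsum m (C : {set {set 'I_m}}) (r : row_index C) x :
  \sum_c cmatrix r c * x c =
  \sum_(c : col_index m | [forall v in (sval r).1, c v == (sval r).2 v]) x c.
Proof.
rewrite [RHS]big_mkcond; apply: eq_bigr => c _; rewrite /cmatrix.
by case: ifP => _; rewrite ?mul1r ?mul0r.
Qed.

Lemma kernel_marg m (C : {set {set 'I_m}}) x :
  in_kernel (@cmatrix m C) x <-> forall F, F \in facets C -> marg x F.
Proof.
split=> [H F Ff e|H r]; last first.
  by rewrite rowsum; apply: H; case/andP: (svalP r).
pose e' : col_index m := [ffun v => if v \in F then e v else false].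
have hr : ((F, e').1 \in facets C) && [forall v in ~: (F, e').1, (F, e').2 v == false].
  rewrite Ff /=; apply/forallP => v; apply/implyP; rewrite inE ffunE.
  by move/negbTE => ->.
rewrite -[RHS](H (exist _ (F, e') hr)) rowsum /=.
apply: eq_bigl => c; apply: eq_forallb => v; rewrite ffunE.
by case: (v \in F).
Qed.

Lemma marg_sub m (x : col_index m -> int) (G H : {set 'I_m}) :
  H \subset G -> marg x G -> marg x H.
Proof.
move=> /subsetP HG mG e.
pose p (c : col_index m) : col_index m := [ffun v => if v \in G then c v else false].
rewrite (partition_big p xpredT) //=; apply: big1 => j _.
case: (boolP ([forall v in H, j v == e v] && [forall v in ~: G, j v == false])).
  case/andP=> /forallP jH /forallP jG.
  rewrite -[RHS](mG j); apply: eq_bigl => c; apply/andP/forallP => [[_ /eqP <-] v|Hc].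
    by apply/implyP => vG; rewrite ffunE vG.
  split.
    apply/forallP => v; apply/implyP => vH.
    have := jH v; rewrite vH => /eqP <-.
    by have := Hc v; rewrite HG.
  apply/eqP/ffunP => v; rewrite ffunE; case: ifP => vG.
    by have := Hc v; rewrite vG => /eqP.
  by have := jG v; rewrite inE vG => /eqP ->.
move=> Hn; apply: big_pred0 => c; apply/negbTE/negP => /andP[/forallP Hc /eqP pc].
case/negP: Hn; apply/andP; split; apply/forallP => v; apply/implyP => Hv.
  by rewrite -pc ffunE HG //; have := Hc v; rewrite Hv.
by rewrite -pc ffunE; move: Hv; rewrite inE => /negbTE ->.
Qed.

Lemma exists_facet m (C : {set {set 'I_m}}) G :
  G \in C -> exists2 F, F \in facets C & G \subset F.
Proof.
move=> GC.
pose Q := fun F : {set 'I_m} => (F \in C) && (G \subset F).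
have P0 : Q G by rewrite /Q GC subxx.
case: (@arg_maxnP _ G Q (fun F : {set 'I_m} => #|F|) P0) => F /andP[FC GF] Fmax.
exists F => //; rewrite inE FC /=; apply/forallP => K; apply/implyP => KC.
apply/implyP => FK; rewrite eq_sym eqEcard FK /=.
by apply: Fmax; rewrite /Q KC (subset_trans GF FK).
Qed.

Lemma kernel_faces m (C : {set {set 'I_m}}) x :
  in_kernel (@cmatrix m C) x <-> forall G, G \in C -> marg x G.
Proof.
apply: (iff_trans (kernel_marg C x)); split=> H G GC.
  by case: (exists_facet GC) => F Ff GF; apply: marg_sub GF (H F Ff).
by apply: H; move: GC; rewrite inE => /andP[].
Qed.

Section Law.
Variables (n : nat) (C : {set {set 'I_n}}).
Local Notation wd := (widen_ord (leqnSn n)).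
Local Notation nset := [set i : 'I_n.+1 | i != ord_max].
Local Notation LA := (@cmatrix n.+1 (lawrence C)).
Local Notation CA := (@cmatrix n C).

Lemma kernel_lawrence x :
  in_kernel LA x <-> marg x nset /\
    forall F, F \in facets C -> marg x (ord_max |: [set wd u | u in F]).
Proof.
apply: (iff_trans (kernel_faces _ x)); split=> [H|[Hn HF] G].
  split; first by apply: H; rewrite inE subxx.
  move=> F Ff; apply: H; rewrite inE; apply/orP; right.
  by apply/existsP; exists F; rewrite Ff subxx.
rewrite inE => /orP[sub|/existsP[F /andP[Ff sub]]]; first exact: marg_sub sub Hn.
exact: marg_sub sub (HF F Ff).
Qed.

Definition lift_y (y : col_index n -> int) (c : col_index n.+1) : int :=
  if c ord_max then - y (pic c) else y (pic c).
Definition proj (x : col_index n.+1 -> int) (d : col_index n) := x (ext d false).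

Lemma sum_pic (x : col_index n.+1 -> int) d0 :
  \sum_(c : col_index n.+1 | pic c == d0) x c = x (ext d0 true) + x (ext d0 false).
Proof.
rewrite big_mkcond big_ext /= (bigD1 d0) //= [X in _ + X]big1 ?addr0.
  by rewrite big_bool /= !pic_ext eqxx.
by move=> d /negbTE dn; rewrite big_bool /= !pic_ext dn addr0.
Qed.

Lemma forall_pic (c e : col_index n.+1) :
  [forall v in nset, c v == e v] = (pic c == pic e).
Proof.
rewrite (forall_n (fun v => c v == e v)); apply/forallP/eqP => [H|H u].
  by apply/ffunP => u; rewrite !ffunE; apply/eqP.
by move/ffunP: H => /(_ u); rewrite !ffunE => ->.
Qed.

Lemma marg_n x : marg x nset <-> forall d, x (ext d true) = - x (ext d false).
Proof.
split=> [H d|H e].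
  have := H (ext d false); rewrite (eq_bigl _ _ (fun c => forall_pic c _)).
  by rewrite sum_pic pic_ext => /eqP; rewrite addr_eq0 => /eqP.
by rewrite (eq_bigl _ _ (fun c => forall_pic c _)) sum_pic H addNr.
Qed.

Lemma fe (d : col_index n) b (e : col_index n.+1) (F : {set 'I_n}) :
  [forall u in F, ext d b (wd u) == e (wd u)] = [forall u in F, d u == pic e u].
Proof. by apply: eq_forallb => u; rewrite ext_wd ffunE. Qed.

Lemma sum_lift y (F : {set 'I_n}) (e : col_index n.+1) :
  \sum_(c : col_index n.+1 | [forall v in ord_max |: [set wd u | u in F], c v == e v])
     lift_y y c =
  (if e ord_max then -1 else 1) * \sum_(d : col_index n | [forall u in F, d u == pic e u]) y d.
Proof.
rewrite (eq_bigl _ _ (fun c : col_index n.+1 => forall_F F (fun v => c v == e v))).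
rewrite big_mkcond big_ext /= [in RHS]big_mkcond big_distrr /=.
apply: eq_bigr => d _; rewrite big_bool /= /lift_y !ext_max !fe !pic_ext.
case: (e ord_max); case: [forall u in F, d u == pic e u];
  by rewrite /= ?mulr0 ?mul1r ?addr0 ?add0r ?mulN1r.
Qed.

Lemma marg_lift y (F : {set 'I_n}) :
  marg (lift_y y) (ord_max |: [set wd u | u in F]) <-> marg y F.
Proof.
split=> [H e|H e]; last by rewrite sum_lift H mulr0.
by have := H (ext e false); rewrite sum_lift ext_max mul1r pic_ext.
Qed.

Lemma kernel_lift y : in_kernel LA (lift_y y) <-> in_kernel CA y.
Proof.
apply: (iff_trans (kernel_lawrence _)); apply: iff_sym.
apply: (iff_trans (kernel_marg C y)); split=> [H|[_ H] F Ff]; last first.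
  by apply/marg_lift; apply: H.
split; last by move=> F Ff; apply/marg_lift; apply: H.
by apply/marg_n => d; rewrite /lift_y !ext_max !pic_ext.
Qed.

Lemma decomp x : in_kernel LA x -> x = lift_y (proj x).
Proof.
case/kernel_lawrence => /marg_n Hn _; apply: functional_extensionality => c.
rewrite -[c]ext_pic /lift_y /proj ext_max pic_ext.
by case: (c ord_max); rewrite ?Hn.
Qed.

Lemma liftnz y c : (lift_y y c != 0) = (y (pic c) != 0).
Proof. by rewrite /lift_y; case: (c ord_max); rewrite ?oppr_eq0. Qed.

Lemma supp_lift_sub y z :
  (supp (lift_y y) \subset supp (lift_y z)) = (supp y \subset supp z).
Proof.
apply/subsetP/subsetP => H d.
  have := H (ext d false); rewrite !inE /lift_y ext_max pic_ext; exact.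
by rewrite !inE !liftnz => Hd; have := H (pic d); rewrite !inE; apply.
Qed.

Lemma supp_lift_proper y z :
  (supp (lift_y y) \proper supp (lift_y z)) = (supp y \proper supp z).
Proof. by rewrite !properE !supp_lift_sub. Qed.

Lemma supp_lift0 y : (supp (lift_y y) != set0) = (supp y != set0).
Proof.
congr negb; apply/eqP/eqP => H.
  apply/setP => d; move/setP: H => /(_ (ext d false)).
  by rewrite !inE /lift_y ext_max pic_ext.
apply/setP => c; move/setP: H => /(_ (pic c)).
by rewrite !inE liftnz.
Qed.

Lemma gcd_lift y :
  (\big[gcdn/0%N]_(c : col_index n.+1) `|lift_y y c|%N)%N =
  (\big[gcdn/0%N]_(d : col_index n) `|y d|%N)%N.
Proof.
rewrite big_ext; apply: eq_bigr => d _.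
by rewrite big_bool /= /lift_y !ext_max !pic_ext abszN gcdnn.
Qed.

Lemma circuit_lift y : circuit LA (lift_y y) <-> circuit CA y.
Proof.
split=> [[Hk Hs Hg Hm]|[Hk Hs Hg Hm]]; split.
- exact/kernel_lift.
- by rewrite -supp_lift0.
- by rewrite -gcd_lift.
- move=> z Hz Hzs Hp; apply: (Hm (lift_y z)).
  + exact/kernel_lift.
  + by rewrite supp_lift0.
  + by rewrite supp_lift_proper.
- exact/kernel_lift.
- by rewrite supp_lift0.
- by rewrite gcd_lift.
- move=> z Hz Hzs Hp; have E := decomp Hz; rewrite E in Hz Hzs Hp.
  apply: (Hm (proj z)).
  + exact/kernel_lift.
  + by rewrite -supp_lift0.
  + by rewrite -supp_lift_proper.
Qed.
End Law.

Lemma mem3N (a : int) : (- a \in [:: 0; 1; -1]) = (a \in [:: 0; 1; -1]).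
Proof.
rewrite !inE oppr_eq0 eqr_oppLR eqr_opp.
by case: (a == 1); case: (a == -1); rewrite ?orbT ?orbF.
Qed.

Theorem proposition3p15 (n : nat) (C : {set {set 'I_n}}) :
  is_simplicial_complex C ->
  (unimodular_complex C <-> unimodular_complex (lawrence C)).
Proof.
move=> _; rewrite /unimodular_complex; split=> HU x Hx.
  have E := decomp (let: And4 h _ _ _ := Hx in h).
  rewrite E in Hx *; move/circuit_lift: Hx => Hx c.
  have := HU _ Hx (pic c); rewrite /lift_y.
  by case: (c ord_max); rewrite ?mem3N.
move=> d; have := HU _ ((circuit_lift C x).2 Hx) (ext d false).
by rewrite /lift_y ext_max pic_ext.
Qed.
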